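(* Let $A,B\subseteq V$ be disjoint and $O_A,O_B$ operators on the physical sites of $A$ and $B$ respectively. Assume $Z^X_{BP}\neq0$ for $X\in\{\emptyset,A,B,AB\}$, $\langle O_A\rangle,\langle O_B\rangle\ne0$, and that for each such $X$ the cluster expansion $\log\mathcal Z^X=\log Z^X_{BP}+\sum_{\mathbf W\text{ connected over }\mathcal L_{AB}}\phi(\mathbf W)Z^X_{\mathbf W}$ holds with an absolutely convergent series (with consistent choices of logarithm). Then the connected correlator $\langle O_AO_B\rangle_c:=\langle O_AO_B\rangle-\langle O_A\rangle\langle O_B\rangle$ satisfies $$\langle O_AO_B\rangle_c=\langle O_A\rangle\langle O_B\rangle\left[\exp\Bigg\{\sum_{\substack{\mathbf W\text{ connected over }\mathcal L_{AB}\\ \mathrm{supp}(\mathbf W)\cap A\ne\emptyset,\ \mathrm{supp}(\mathbf W)\cap B\ne\emptyset}}\phi(\mathbf W)\big(Z^{AB}_{\mathbf W}+Z_{\mathbf W}-Z^A_{\mathbf W}-Z^B_{\mathbf W}\big)\Bigg\}-1\right].$$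
   Context: Let $|\psi\rangle$ be a PEPS on a finite graph $G=(V,E)$; $\mathcal Z=\langle\psi|\psi\rangle>0$ is the norm network. For $X\in\{A,B,AB\}$, $\mathcal Z^X$ is the network for $\langle\psi|O_X|\psi\rangle$ with $O_X=O_A$, $O_B$, $O_AO_B$ respectively (operators inserted at the corresponding sites, tensors unchanged elsewhere); $\mathcal Z^\emptyset=\mathcal Z$. Expectations: $\langle O_X\rangle=\mathcal Z^X/\mathcal Z$. Fix a BP fixed point of $\mathcal Z$ (messages $\mu_{v\to w}$ with $I_{vw}=\mu_{v\to w}\star\mu_{w\to v}\ne0$, each vertex tensor contracted with all incoming messages except from $w$ proportional to $\mu_{v\to w}$), used for all networks; $\mathcal P^\perp_{vw}=\mathbb 1-\mu_{v\to w}\otimes\mu_{w\to v}/I_{vw}$. For $F\subseteq E$, $\tilde Z^X_F$ is the contraction of $\mathcal Z^X$ with $\mathcal P^\perp$ on edges in $F$ and $\mu\otimes\mu/I$ elsewhere; $Z^X_{BP}=\tilde Z^X_\emptyset$. $\mathcal L_{AB}$: connected subgraphs of $G$ with at least one edge in which every vertex not in $A\cup B$ has degree $\ge2$; supports are vertex sets; weights $Z^X_l=\tilde Z^X_{E(l)}/Z^X_{BP}$ (no superscript = $\mathcal Z$). Compatible = vertex-disjoint. Clusters $\mathbf W=\{(l_i,\eta_i)\}$ are finite multisets over $\mathcal L_{AB}$ with $Z^X_{\mathbf W}=\prod(Z^X_{l_i})^{\eta_i}$, $\mathrm{supp}(\mathbf W)=\bigcup\mathrm{supp}(l_i)$; interaction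 graph: $\eta_i$ vertices per $l_i$, adjacent iff equal or incompatible; connected if it is connected. Ursell function $\phi(\mathbf W)=\frac1{\prod\eta_i!}\sum_C(-1)^{|E(C)|}$ over connected spanning subgraphs $C$ of the interaction graph. *)

(* Defs.v *)
From HB Require Import structures.
From mathcomp Require Import all_boot all_order all_algebra.
From mathcomp Require Import complex.
From mathcomp Require Import reals topology normedtype sequences exp trigo.
From mathcomp Require Import classical_sets filter.
From mathcomp Require Import finset.


Unset Strict Implicit.
Unset Printing Implicit Defensive.

Import Order.TTheory GRing.Theory Num.Theory.
Import numFieldNormedType.Exports.
Local Open Scope ring_scope.

Definition gconnected {T : finType} (S : {set T}) (C : {set {set T}}) : bool :=
  (S != set0) &&
  [forall U : {set T}, ((U \proper S) && (U != set0)) ==>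
     [exists e in C, (e :&: U != set0) && (e :&: (S :\: U) != set0)]].

(* The finite graph G = (V, E).  Each edge e has endpoints src e, dst e *)
(* (the orientation is pure bookkeeping).                               *)
Section Graph.
Context {V E : finType}.
Variables (src dst : E -> V).

Definition simple_graph : Prop :=
  (forall e, src e != dst e) /\
  (forall e e', [set src e; dst e] = [set src e'; dst e'] -> e = e').

Definition incident (v : V) (e : E) : bool := (src e == v) || (dst e == v).

Definition Inc (v : V) := {e : E | incident v e}.

Definition vset (F : {set E}) : {set V} := [set v | [exists e in F, incident v e]].

Definition eimg (F : {set E}) : {set {set V}} := [set [set src e; dst e] | e in F].

Definition deg (F : {set E}) (v : V) : nat := #|[set e in F | incident v e]|.

(* L_AB: connected subgraphs with >= 1 edge (identified with their edge   *)
(* sets) in which every vertex outside A u B has degree >= 2.            *)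
Definition inL (A B : {set V}) (F : {set E}) : bool :=
  [&& F != set0, gconnected (vset F) (eimg F) &
      [forall v in vset F :\: (A :|: B), (1 < deg F v)%N]].

(* Clusters: finite multisets over L_AB, as multiplicity functions.      *)
Definition cluster := {ffun {set E} -> nat}.

Definition is_cluster (A B : {set V}) (W : cluster) : bool :=
  [forall F, (0 < W F)%N ==> inL A B F].

Definition csize (W : cluster) : nat := (\sum_F W F)%N.

Definition csupp (W : cluster) : {set V} := \bigcup_(F | (0 < W F)%N) vset F.

(* Interaction graph: eta_i vertices (l_i, k), k < eta_i, per l_i;       *)
(* adjacent iff equal or incompatible (= not vertex-disjoint).           *)
Definition IV (n : nat) (W : cluster) : {set ({set E} * 'I_n)} :=
  [set p : ({set E} * 'I_n) | (p.2 < W p.1)%N].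

Definition IE (n : nat) (W : cluster) : {set {set ({set E} * 'I_n)}} :=
  [set e | [exists p : ({set E} * 'I_n), exists q : ({set E} * 'I_n),
     [&& e == [set p; q], p != q, p \in IV n W, q \in IV n W &
         (p.1 == q.1) || ~~ [disjoint vset p.1 & vset q.1]]]].

Definition cl_connected (W : cluster) : bool :=
  gconnected (IV (csize W).+1 W) (IE (csize W).+1 W).

Definition ursell {K : fieldType} (W : cluster) : K :=
  (\prod_F ((W F)`!)%:R)^-1 *
  \sum_(Cs : {set {set ({set E} * 'I_(csize W).+1)}} |
          (Cs \subset IE (csize W).+1 W) && gconnected (IV (csize W).+1 W) Cs)
     (-1) ^+ #|Cs|.

Definition clweight {K : fieldType} (z : {set E} -> K) (W : cluster) : K :=
  \prod_F z F ^+ W F.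

(* Partial sums of a cluster series over the clusters satisfying P, taken *)
(* over all clusters of total size <= N (each exactly once).            *)
Definition cnat {N : nat} (W : {ffun {set E} -> 'I_N.+1}) : cluster :=
  [ffun F => nat_of_ord (W F)].

Definition psum {K : fieldType} (P : pred cluster) (t : cluster -> K) (N : nat) : K :=
  \sum_(W : {ffun {set E} -> 'I_N.+1} | (csize (cnat W) <= N)%N && P (cnat W))
     t (cnat W).

End Graph.

Section Cplx.
Context {R : realType}.

Definition cexp (z : R[i]) : R[i] :=
  Complex (expR (complex.Re z) * cos (complex.Im z)) (expR (complex.Re z) * sin (complex.Im z)).

Local Open Scope classical_set_scope.
Definition ccvg (u : nat -> R[i]) (l : R[i]) : Prop :=
  ((fun n => complex.Re (u n)) @ \oo --> complex.Re l) /\ ((fun n => complex.Im (u n)) @ \oo --> complex.Im l).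

Local Close Scope classical_set_scope.
End Cplx.

Section PEPS.
Context {R : realType} {V E : finType}.
Variables (src dst : E -> V).
Variables (Phys : V -> finType) (Bnd : E -> finType).

Local Notation C := R[i].

(* double-layer bond index on edge e : (ket index, bra index) *)
Definition Kb (e : E) : finType := (Bnd e * Bnd e)%type.

Definition Lcfg (v : V) := {dffun forall e : Inc src dst v, Bnd (val e)}.
Definition LKcfg (v : V) := {dffun forall e : Inc src dst v, Kb (val e)}.

Definition PC := {dffun forall v : V, Phys v}.
(* half-edge configurations (one double-layer index per edge side) *)
Definition HC := {dffun forall e : E, Kb e}.

Definition localize (hL hR : HC) (v : V) : LKcfg v :=
  [ffun e : Inc src dst v => if src (val e) == v then hL (val e) else hR (val e)].

Definition kpart {v : V} (x : LKcfg v) : Lcfg v := [ffun e : Inc src dst v => (x e).1].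
Definition bpart {v : V} (x : LKcfg v) : Lcfg v := [ffun e : Inc src dst v => (x e).2].

Variable Aten : forall v : V, Phys v -> Lcfg v -> C.

(* contraction of the double-layer network for <psi|O|psi> where each    *)
(* edge e carries the matrix M e (x_src, x_dst) (identity = plain net)   *)
Definition Znet (O : PC -> PC -> C) (M : forall e : E, Kb e -> Kb e -> C) : C :=
  \sum_(s : PC) \sum_(s' : PC) O s s' *
   \sum_(hL : HC) \sum_(hR : HC)
     ((\prod_e M e (hL e) (hR e)) *
      \prod_v ((Aten v (s v) (bpart (localize hL hR v)))^* *
               Aten v (s' v) (kpart (localize hL hR v)))).

Definition delta (e : E) (x y : Kb e) : C := (x == y)%:R.

(* operators on physical configurations: matrix elements <s|O|s'> *)
Definition op_id (s s' : PC) : C := (s == s')%:R.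
Definition op_mul (O1 O2 : PC -> PC -> C) (s s' : PC) : C := \sum_t O1 s t * O2 t s'.

Definition LPC (A : {set V}) := {dffun forall v : {v : V | v \in A}, Phys (val v)}.
Definition restr (A : {set V}) (s : PC) : LPC A :=
  [ffun v : {v : V | v \in A} => s (val v)].
Definition ext_op (A : {set V}) (o : LPC A -> LPC A -> C) (s s' : PC) : C :=
  o (restr A s) (restr A s') * \prod_(v | v \notin A) (s v == s' v)%:R.

Definition Znw (O : PC -> PC -> C) : C := Znet O delta.

(* BP messages: mu e true = mu_{src e -> dst e}, mu e false = mu_{dst e -> src e} *)
Variable mu : forall e : E, bool -> Kb e -> C.

Definition Ie (e : E) : C := \sum_(x : Kb e) mu e true x * mu e false x.

(* rank-one BP projector on edge e, as a matrix (x_src, x_dst): the src   *)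
(* leg is contracted with the message coming from dst and vice versa.    *)
Definition Pbp (e : E) (x y : Kb e) : C := mu e false x * mu e true y / Ie e.
Definition Pperp (e : E) (x y : Kb e) : C := (x == y)%:R - Pbp e x y.

Definition edgeM (F : {set E}) (e : E) : Kb e -> Kb e -> C :=
  if e \in F then Pperp e else Pbp e.

Definition Ztilde (O : PC -> PC -> C) (F : {set E}) : C := Znet O (edgeM F).
Definition ZBP (O : PC -> PC -> C) : C := Ztilde O set0.
Definition Zloop (O : PC -> PC -> C) (F : {set E}) : C := Ztilde O F / ZBP O.

Definition Tv {v : V} (x : LKcfg v) : C :=
  \sum_(s : Phys v) (Aten v s (bpart x))^* * Aten v s (kpart x).

Definition inmsg {v : V} (e : Inc src dst v) : Kb (val e) -> C :=
  if src (val e) == v then mu (val e) false else mu (val e) true.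
Definition outmsg {v : V} (e : Inc src dst v) : Kb (val e) -> C :=
  if src (val e) == v then mu (val e) true else mu (val e) false.

Definition BP_fixed_point : Prop :=
  (forall e, Ie e != 0) /\
  forall (v : V) (e0 : Inc src dst v), exists c : C, forall y : Kb (val e0),
    \sum_(x : LKcfg v | x e0 == y) (Tv x * \prod_(e | e != e0) inmsg e (x e))
    = c * outmsg e0 y.

Definition clterm (O : PC -> PC -> C) (W : @cluster E) : C :=
  ursell src dst W * clweight (Zloop O) W.

Definition conn_cl (A B : {set V}) : pred (@cluster E) :=
  fun W => is_cluster src dst A B W && cl_connected src dst W.

(* the hypothesis: log Z^X = log Z^X_BP + sum_W phi(W) Z^X_W, absolutely  *)
(* convergent; i.e. Z^X = Z^X_BP * exp(sum), with the series absolutely   *)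
(* convergent (bounded partial sums of moduli).                           *)
Definition cluster_expansion (A B : {set V}) (O : PC -> PC -> C) : Prop :=
  (exists M : C, forall N, psum (conn_cl A B) (fun W => `|clterm O W|) N <= M) /\
  exists S : C, ccvg (psum (conn_cl A B) (clterm O)) S /\ Znw O = ZBP O * cexp S.

Definition expect (O : PC -> PC -> C) : C := Znw O / Znw op_id.

Definition corr_term (OA OB : PC -> PC -> C) (W : @cluster E) : C :=
  ursell src dst W *
  (clweight (Zloop (op_mul OA OB)) W + clweight (Zloop op_id) W
   - clweight (Zloop OA) W - clweight (Zloop OB) W).

Definition conn_cl_AB (A B : {set V}) : pred (@cluster E) :=
  fun W => [&& conn_cl A B W, ~~ [disjoint csupp src dst W & A] &
                              ~~ [disjoint csupp src dst W & B]].

End PEPS.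

(* Main.v *)
Require Import Defs.
Set Warnings "-all".
From HB Require Import structures.
From mathcomp Require Import all_boot all_order all_algebra.
From mathcomp Require Import complex.
From mathcomp Require Import reals topology normedtype sequences exp trigo.
From mathcomp Require Import ring.
Import Order.TTheory GRing.Theory Num.Theory.
Import numFieldNormedType.Exports.
Local Open Scope ring_scope.

Definition mixf {I : finType} {T : I -> Type} (P : pred I)
  (a b : {dffun forall i, T i}) : {dffun forall i, T i} :=
  [ffun i => if P i then a i else b i].

Lemma mixfK {I : finType} {T : I -> Type} (P : pred I) (a b : {dffun forall i, T i}) :
  mixf P (mixf P a b) (mixf P b a) = a.
Proof. apply/ffunP => i. rewrite /mixf !ffunE. destruct (P i); reflexivity. Qed.

Section Swap.
Variables (R : realType) (V E : finType) (src dst : E -> V)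
  (Phys : V -> finType) (Bnd : E -> finType)
  (Aten : forall v : V, Phys v -> Lcfg src dst Bnd v -> R[i])
  (mu : forall e : E, bool -> Kb Bnd e -> R[i]).

Local Notation C := R[i].
Local Notation PC := (PC Phys).
Local Notation HC := (HC Bnd).
Local Notation X := (PC * PC * HC * HC)%type.

Definition Tl (v : V) (a b : Phys v) (x : LKcfg src dst Bnd v) : C :=
  (Aten v a (bpart src dst Bnd x))^* * Aten v b (kpart src dst Bnd x).

Definition term (O : PC -> PC -> C) (M : forall e : E, Kb Bnd e -> Kb Bnd e -> C) (x : X) : C :=
  O x.1.1.1 x.1.1.2 * ((\prod_e M e (x.1.2 e) (x.2 e)) *
    \prod_v Tl v (x.1.1.1 v) (x.1.1.2 v) (localize src dst Bnd x.1.2 x.2 v)).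

Lemma Znet_term O M : Znet src dst Phys Bnd Aten O M = \sum_(x : X) term O M x.
Proof.
have -> : \sum_(x : X) term O M x =
   \sum_(a : PC) \sum_(b : PC) \sum_(c : HC) \sum_(d : HC) term O M (a, b, c, d).
  by rewrite !pair_big /=; apply: eq_bigr => -[[[a b] c] d].
rewrite /Znet; apply: eq_bigr => s _; apply: eq_bigr => s' _.
rewrite mulr_sumr; apply: eq_bigr => hL _; rewrite mulr_sumr; apply: eq_bigr => hR _.
by [].
Qed.


Definition sw (D : {set V}) (p : X * X) : X * X :=
  let: ((s, s', hL, hR), (t, t', kL, kR)) := p in
  ((mixf (fun v => v \in D) t s, mixf (fun v => v \in D) t' s',
    mixf (fun e => src e \in D) kL hL, mixf (fun e => dst e \in D) kR hR),
   (mixf (fun v => v \in D) s t, mixf (fun v => v \in D) s' t',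
    mixf (fun e => src e \in D) hL kL, mixf (fun e => dst e \in D) hR kR)).

Lemma sw_inv D : involutive (sw D).
Proof.
by case => -[[[s s'] hL] hR] [[[t t'] kL] kR] /=; rewrite !mixfK.
Qed.

Lemma loc_mix (D : {set V}) (hL hR kL kR : HC) v :
  localize src dst Bnd (mixf (fun e => src e \in D) kL hL) (mixf (fun e => dst e \in D) kR hR) v
  = if v \in D then localize src dst Bnd kL kR v else localize src dst Bnd hL hR v.
Proof.
have H : forall (e : Inc src dst v), src (val e) != v -> dst (val e) = v.
  by move=> e; have := valP e; rewrite /incident => /orP [/eqP -> /eqP //| /eqP ->].
case: ifP => vD; apply/ffunP => e; rewrite /localize /mixf !ffunE;
  case: ifP => [/eqP -> | /negbT /H ->]; rewrite vD //.
Qed.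

Lemma vset_in (F : {set E}) e : e \in F -> (src e \in vset src dst F) && (dst e \in vset src dst F).
Proof.
move=> eF; rewrite !inE; apply/andP; split; apply/existsP; exists e;
  by rewrite eF /incident eqxx ?orbT.
Qed.


Local Notation mV D := (fun v : V => v \in D).
Local Notation mS D := (fun e : E => src e \in D).
Local Notation mD D := (fun e : E => dst e \in D).

Lemma swap_lemma (D : {set V}) (F : {set E}) (O1 O2 O3 O4 : PC -> PC -> C) :
  [disjoint vset src dst F & D] ->
  (forall s s' t t' : PC, O1 s s' * O2 t t' =
     O3 (mixf (mV D) t s) (mixf (mV D) t' s') * O4 (mixf (mV D) s t) (mixf (mV D) s' t')) ->
  Ztilde src dst Phys Bnd Aten mu O1 F * ZBP src dst Phys Bnd Aten mu O2 =
  Ztilde src dst Phys Bnd Aten mu O3 F * ZBP src dst Phys Bnd Aten mu O4.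
Proof.
move=> dFD hO.
rewrite /ZBP /Ztilde !Znet_term !mulr_suml.
under eq_bigr do rewrite mulr_sumr.
under [RHS]eq_bigr do rewrite mulr_sumr.
rewrite !pair_big /=.
rewrite [RHS](reindex_inj (inv_inj (sw_inv D))) /=.
apply: eq_bigr => -[[[[s s'] hL] hR] [[[t t'] kL] kR]] _ /=.
rewrite /term /=.
have hE : (\prod_e edgeM Bnd mu F e (hL e) (hR e)) * (\prod_e edgeM Bnd mu set0 e (kL e) (kR e)) =
  (\prod_e edgeM Bnd mu F e (mixf (mS D) kL hL e) (mixf (mD D) kR hR e)) *
  (\prod_e edgeM Bnd mu set0 e (mixf (mS D) hL kL e) (mixf (mD D) hR kR e)).
  rewrite -!big_split /=; apply: eq_bigr => e _; rewrite /mixf !ffunE.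
  case: (boolP (src e \in D)) => hs; case: (boolP (dst e \in D)) => hd //=;
  (have eF : e \notin F by apply/negP => /vset_in /andP [h1 h2];
     move: hs hd; rewrite ?(disjointFr dFD h1) ?(disjointFr dFD h2));
  rewrite /edgeM (negbTE eF) inE /Pbp; ring.
have hV : (\prod_v Tl v (s v) (s' v) (localize src dst Bnd hL hR v)) *
          (\prod_v Tl v (t v) (t' v) (localize src dst Bnd kL kR v)) =
  (\prod_v Tl v (mixf (mV D) t s v) (mixf (mV D) t' s' v)
      (localize src dst Bnd (mixf (mS D) kL hL) (mixf (mD D) kR hR) v)) *
  (\prod_v Tl v (mixf (mV D) s t v) (mixf (mV D) s' t' v)
      (localize src dst Bnd (mixf (mS D) hL kL) (mixf (mD D) hR kR) v)).
  rewrite -!big_split /=; apply: eq_bigr => v _; rewrite !loc_mix /mixf !ffunE.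
  by case: ifP => _ //; rewrite mulrC.
transitivity ((O1 s s' * O2 t t') *
  ((\prod_e edgeM Bnd mu F e (hL e) (hR e)) * (\prod_e edgeM Bnd mu set0 e (kL e) (kR e))) *
  ((\prod_v Tl v (s v) (s' v) (localize src dst Bnd hL hR v)) *
          (\prod_v Tl v (t v) (t' v) (localize src dst Bnd kL kR v)))); first by ring.
rewrite (hO s s' t t') hE hV; ring.
Qed.

End Swap.

Section Ops.
Variables (R : realType) (V : finType) (Phys : V -> finType) (A B : {set V})
  (oA : LPC Phys A -> LPC Phys A -> R[i]) (oB : LPC Phys B -> LPC Phys B -> R[i]).
Hypothesis dAB : [disjoint A & B].

Local Notation C := R[i].
Local Notation PC := (PC Phys).
Local Notation mV D := (fun v : V => v \in D).

Definition PQ (Q : pred V) (x y : PC) : C := \prod_(v | Q v) (x v == y v)%:R.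
Definition QR : pred V := fun v => (v \notin A) && (v \notin B).

Lemma op_id_prod (s s' : PC) : op_id Phys s s' = \prod_v (s v == s' v)%:R :> C.
Proof.
rewrite /op_id; case: (eqVneq s s') => [->|neq].
  by rewrite big1 // => v _; rewrite eqxx.
have [v hv] : exists v, s v != s' v.
  apply/existsP; apply: contraNT neq => /existsPn h; apply/eqP/ffunP => v.
  by apply/eqP; move: (h v); rewrite negbK.
by rewrite (bigD1 v) //= (negbTE hv) mul0r.
Qed.

Lemma split3 (f : V -> C) :
  \prod_v f v = (\prod_(v in A) f v) * (\prod_(v in B) f v) * \prod_(v | QR v) f v.
Proof.
rewrite (bigID (mV A)) /= -mulrA; congr (_ * _).
rewrite (bigID (mV B)) /=; congr (_ * _).
by apply: eq_bigl => v; case: (boolP (v \in B)) => hB; rewrite ?andbT ?andbF //= (disjointFl dAB hB).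
Qed.

Lemma splitA (f : V -> C) :
  \prod_(v | v \notin A) f v = (\prod_(v in B) f v) * \prod_(v | QR v) f v.
Proof.
rewrite (bigID (mV B)) /=; congr (_ * _).
by apply: eq_bigl => v; case: (boolP (v \in B)) => hB; rewrite ?andbT ?andbF //= (disjointFl dAB hB).
Qed.

Lemma splitB (f : V -> C) :
  \prod_(v | v \notin B) f v = (\prod_(v in A) f v) * \prod_(v | QR v) f v.
Proof.
rewrite (bigID (mV A)) /=; congr (_ * _).
  by apply: eq_bigl => v; case: (boolP (v \in A)) => hA; rewrite ?andbT ?andbF //= (disjointFr dAB hA).
by apply: eq_bigl => v; rewrite /QR andbC.
Qed.

Lemma nf0 (x y : PC) : op_id Phys x y = PQ (mV A) x y * PQ (mV B) x y * PQ QR x y.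
Proof. by rewrite op_id_prod split3. Qed.

Lemma nfA (x y : PC) : ext_op Phys A oA x y =
  oA (restr Phys A x) (restr Phys A y) * PQ (mV B) x y * PQ QR x y.
Proof. by rewrite /ext_op splitA mulrA. Qed.

Lemma nfB (x y : PC) : ext_op Phys B oB x y =
  oB (restr Phys B x) (restr Phys B y) * PQ (mV A) x y * PQ QR x y.
Proof. by rewrite /ext_op splitB mulrA. Qed.

Lemma restr_in (D : {set V}) (t s : PC) (Q : {set V}) : Q \subset D ->
  restr Phys Q (mixf (mV D) t s) = restr Phys Q t.
Proof.
move=> QD; apply/ffunP => v; rewrite !ffunE.
by rewrite (subsetP QD _ (valP v)).
Qed.

Lemma restr_out (D : {set V}) (t s : PC) (Q : {set V}) : [disjoint Q & D] ->
  restr Phys Q (mixf (mV D) t s) = restr Phys Q s.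
Proof.
move=> QD; apply/ffunP => v; rewrite !ffunE.
by rewrite (disjointFr QD (valP v)).
Qed.

Lemma PQ_in (D : {set V}) (Q : pred V) (t s t' s' : PC) : (forall v, Q v -> v \in D) ->
  PQ Q (mixf (mV D) t s) (mixf (mV D) t' s') = PQ Q t t'.
Proof. by move=> h; apply: eq_bigr => v /h hv; rewrite !ffunE hv. Qed.

Lemma PQ_out (D : {set V}) (Q : pred V) (t s t' s' : PC) : (forall v, Q v -> v \notin D) ->
  PQ Q (mixf (mV D) t s) (mixf (mV D) t' s') = PQ Q s s'.
Proof. by move=> h; apply: eq_bigr => v /h hv; rewrite !ffunE (negbTE hv). Qed.


Lemma exists_neq (s s' : PC) : s != s' -> exists v, s v != s' v.
Proof.
move=> neq; apply/existsP; apply: contraNT neq => /existsPn h; apply/eqP/ffunP => v.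
by apply/eqP; move: (h v); rewrite negbK.
Qed.

Lemma nfAB (s s' : PC) : op_mul Phys (ext_op Phys A oA) (ext_op Phys B oB) s s' =
  oA (restr Phys A s) (restr Phys A s') * oB (restr Phys B s) (restr Phys B s') * PQ QR s s'.
Proof.
set u0 := mixf (mV A) s' s.
rewrite /op_mul (bigD1 u0) //= big1 ?addr0.
  rewrite nfA nfB restr_in ?subxx // restr_out 1?disjoint_sym //.
  have h1 : PQ (mV B) s u0 = 1.
    by apply: big1 => v vB; rewrite ffunE (disjointFl dAB vB) eqxx.
  have h2 : PQ QR s u0 = 1.
    by apply: big1 => v /andP [vA _]; rewrite ffunE (negbTE vA) eqxx.
  have h3 : PQ (mV A) u0 s' = 1.
    by apply: big1 => v vA; rewrite ffunE vA eqxx.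
  have h4 : PQ QR u0 s' = PQ QR s s'.
    by apply: eq_bigr => v /andP [vA _]; rewrite ffunE (negbTE vA).
  rewrite h1 h2 h3 h4; ring.
move=> u neq; have [v hv] := exists_neq _ _ neq.
case: (boolP (v \in A)) => vA.
  have z : PQ (mV A) u s' = 0.
    by rewrite /PQ (bigD1 v) //=; move: hv; rewrite ffunE vA => /negbTE ->; rewrite mul0r.
  by rewrite nfB z !(mul0r, mulr0).
have z : \prod_(w | w \notin A) (s w == u w)%:R = 0 :> C.
  rewrite (bigD1 v) //=; move: hv; rewrite ffunE (negbTE vA) eq_sym => /negbTE ->.
  by rewrite mul0r.
by rewrite /ext_op z !(mul0r, mulr0).
Qed.


Lemma BoutA v : v \in B -> v \notin A. Proof. by move=> h; rewrite (disjointFl dAB h). Qed.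
Lemma AoutB v : v \in A -> v \notin B. Proof. by move=> h; rewrite (disjointFr dAB h). Qed.
Lemma RoutA v : QR v -> v \notin A. Proof. by case/andP. Qed.
Lemma RoutB v : QR v -> v \notin B. Proof. by case/andP. Qed.
Lemma inself (D : {set V}) v : v \in D -> v \in D. Proof. by []. Qed.

Local Notation O0 := (op_id Phys).
Local Notation OA := (ext_op Phys A oA).
Local Notation OB := (ext_op Phys B oB).
Local Notation OAB := (op_mul Phys OA OB).

Lemma dBA : [disjoint B & A]. Proof. by rewrite disjoint_sym. Qed.

Ltac simpmixA :=
  rewrite ?(@PQ_in A (mV A) _ _ _ _ (@inself A))
          ?(@PQ_out A (mV B) _ _ _ _ BoutA) ?(@PQ_out A QR _ _ _ _ RoutA)
          ?(@restr_in A _ _ A (subxx _)) ?(@restr_out A _ _ B dBA).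
Ltac simpmixB :=
  rewrite ?(@PQ_in B (mV B) _ _ _ _ (@inself B))
          ?(@PQ_out B (mV A) _ _ _ _ AoutB) ?(@PQ_out B QR _ _ _ _ RoutB)
          ?(@restr_in B _ _ B (subxx _)) ?(@restr_out B _ _ A dAB).

Lemma I1 s s' t t' : OA s s' * O0 t t' =
  O0 (mixf (mV A) t s) (mixf (mV A) t' s') * OA (mixf (mV A) s t) (mixf (mV A) s' t').
Proof. rewrite !nfA !nf0; simpmixA; ring. Qed.

Lemma I2 s s' t t' : OAB s s' * OB t t' =
  OB (mixf (mV A) t s) (mixf (mV A) t' s') * OAB (mixf (mV A) s t) (mixf (mV A) s' t').
Proof. rewrite !nfAB !nfB; simpmixA; ring. Qed.

Lemma I3 s s' t t' : OB s s' * O0 t t' =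
  O0 (mixf (mV B) t s) (mixf (mV B) t' s') * OB (mixf (mV B) s t) (mixf (mV B) s' t').
Proof. rewrite !nfB !nf0; simpmixB; ring. Qed.

Lemma I4 s s' t t' : OAB s s' * OA t t' =
  OA (mixf (mV B) t s) (mixf (mV B) t' s') * OAB (mixf (mV B) s t) (mixf (mV B) s' t').
Proof. rewrite !nfAB !nfA; simpmixB; ring. Qed.

Lemma I5 s s' t t' : OAB s s' * O0 t t' =
  OA (mixf (mV B) t s) (mixf (mV B) t' s') * OB (mixf (mV B) s t) (mixf (mV B) s' t').
Proof. rewrite !nfAB !nf0 nfA nfB; simpmixB; ring. Qed.

End Ops.

Lemma cexpD (R : realType) (x y : R[i]) : cexp (x + y) = cexp x * cexp y.
Proof.
case: x => a b; case: y => c d.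
rewrite /cexp /= expRD cosD sinD.
apply/eqP; rewrite eq_complex /=; apply/andP; split; apply/eqP; ring.
Qed.

Lemma cexp0 (R : realType) : cexp (0 : R[i]) = 1.
Proof. by rewrite /cexp /= expR0 cos0 sin0 mulr1 mulr0. Qed.

Lemma ReD (R : realType) (x y : R[i]) : complex.Re (x + y) = complex.Re x + complex.Re y.
Proof. by case: x; case: y. Qed.
Lemma ReB (R : realType) (x y : R[i]) : complex.Re (x - y) = complex.Re x - complex.Re y.
Proof. by case: x; case: y. Qed.
Lemma ImD (R : realType) (x y : R[i]) : complex.Im (x + y) = complex.Im x + complex.Im y.
Proof. by case: x; case: y. Qed.
Lemma ImB (R : realType) (x y : R[i]) : complex.Im (x - y) = complex.Im x - complex.Im y.
Proof. by case: x; case: y. Qed.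

Lemma div_cross (K : fieldType) (x y p q : K) : p != 0 -> q != 0 -> x * q = y * p -> x / p = y / q.
Proof. by move=> hp hq h; rewrite -(mulfK hq x) h; field; apply/andP. Qed.

Lemma ccvg_comb (R : realType) (u1 u2 u3 u4 : nat -> R[i]) l1 l2 l3 l4 :
  ccvg u1 l1 -> ccvg u2 l2 -> ccvg u3 l3 -> ccvg u4 l4 ->
  ccvg (fun n => u1 n + u2 n - u3 n - u4 n) (l1 + l2 - l3 - l4).
Proof.
move=> [a1 b1] [a2 b2] [a3 b3] [a4 b4]; split.
  have -> : (fun n => complex.Re (u1 n + u2 n - u3 n - u4 n)) =
    (fun n => complex.Re (u1 n) + complex.Re (u2 n) - complex.Re (u3 n) - complex.Re (u4 n)).
    by apply: boolp.funext => n; rewrite !ReB ReD.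
  rewrite !ReB ReD.
exact: (cvgB (cvgB (cvgD a1 a2) a3) a4).
have -> : (fun n => complex.Im (u1 n + u2 n - u3 n - u4 n)) =
  (fun n => complex.Im (u1 n) + complex.Im (u2 n) - complex.Im (u3 n) - complex.Im (u4 n)).
  by apply: boolp.funext => n; rewrite !ImB ImD.
rewrite !ImB ImD.
exact: (cvgB (cvgB (cvgD b1 b2) b3) b4).
Qed.

Section Main.
Variables (R : realType) (V E : finType) (src dst : E -> V)
  (Phys : V -> finType) (Bnd : E -> finType)
  (Aten : forall v : V, Phys v -> Lcfg src dst Bnd v -> R[i])
  (mu : forall e : E, bool -> Kb Bnd e -> R[i])
  (A B : {set V})
  (oA : LPC Phys A -> LPC Phys A -> R[i])
  (oB : LPC Phys B -> LPC Phys B -> R[i]).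
Hypothesis dAB : [disjoint A & B].

Local Notation C := R[i].
Local Notation O0 := (op_id Phys).
Local Notation OA := (ext_op Phys A oA).
Local Notation OB := (ext_op Phys B oB).
Local Notation OAB := (op_mul Phys OA OB).
Local Notation Zt := (Ztilde src dst Phys Bnd Aten mu).
Local Notation ZB := (ZBP src dst Phys Bnd Aten mu).
Local Notation ZL := (Zloop src dst Phys Bnd Aten mu).

Hypotheses (n0 : ZB O0 != 0) (nA : ZB OA != 0) (nB : ZB OB != 0) (nAB : ZB OAB != 0).

Lemma vset0 (D : {set V}) : [disjoint vset src dst set0 & D].
Proof.
apply: eq_disjoint0 => v; rewrite !inE; apply/existsP => -[e]; by rewrite inE.
Qed.

Lemma ZBP_rel : ZB OAB * ZB O0 = ZB OA * ZB OB.
Proof.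
exact: (@swap_lemma R V E src dst Phys Bnd Aten mu _ _ _ _ _ _ (vset0 B) (@I5 R V Phys A B oA oB dAB)).
Qed.

Lemma ZL_A F : [disjoint vset src dst F & A] -> ZL OAB F = ZL OB F /\ ZL OA F = ZL O0 F.
Proof.
move=> dF; split; apply: div_cross => //.
  exact: (@swap_lemma R V E src dst Phys Bnd Aten mu _ _ _ _ _ _ dF (@I2 R V Phys A B oA oB dAB)).
exact: (@swap_lemma R V E src dst Phys Bnd Aten mu _ _ _ _ _ _ dF (@I1 R V Phys A B oA dAB)).
Qed.

Lemma ZL_B F : [disjoint vset src dst F & B] -> ZL OAB F = ZL OA F /\ ZL OB F = ZL O0 F.
Proof.
move=> dF; split; apply: div_cross => //.
  exact: (@swap_lemma R V E src dst Phys Bnd Aten mu _ _ _ _ _ _ dF (@I4 R V Phys A B oA oB dAB)).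
exact: (@swap_lemma R V E src dst Phys Bnd Aten mu _ _ _ _ _ _ dF (@I3 R V Phys A B oB dAB)).
Qed.


Lemma clw_eq (z1 z2 : {set E} -> C) (W : {ffun {set E} -> nat}) :
  (forall F, (0 < W F)%N -> z1 F = z2 F) -> clweight z1 W = clweight z2 W.
Proof.
move=> h; apply: eq_bigr => F _; case: (posnP (W F)) => [->|/h ->]; by rewrite ?expr0.
Qed.

Lemma vset_sub (W : {ffun {set E} -> nat}) F : (0 < W F)%N -> vset src dst F \subset csupp src dst W.
Proof. by move=> h; apply: (bigcup_sup F h). Qed.

Lemma corr_split W : corr_term src dst Phys Bnd Aten mu OA OB W =
  clterm src dst Phys Bnd Aten mu OAB W + clterm src dst Phys Bnd Aten mu O0 W
  - clterm src dst Phys Bnd Aten mu OA W - clterm src dst Phys Bnd Aten mu OB W.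
Proof. rewrite /corr_term /clterm; ring. Qed.

Lemma corr_zero W : ~~ conn_cl_AB src dst A B W -> conn_cl src dst A B W ->
  corr_term src dst Phys Bnd Aten mu OA OB W = 0.
Proof.
rewrite /conn_cl_AB => h c; rewrite c /= negb_and !negbK in h.
case/orP: h => d.
  have e1 : clweight (ZL OAB) W = clweight (ZL OB) W.
    by apply: clw_eq => F hF; exact: (ZL_A F (disjointWl (vset_sub W F hF) d)).1.
  have e2 : clweight (ZL OA) W = clweight (ZL O0) W.
    by apply: clw_eq => F hF; exact: (ZL_A F (disjointWl (vset_sub W F hF) d)).2.
  rewrite /corr_term e1 e2; ring.
have e1 : clweight (ZL OAB) W = clweight (ZL OA) W.
  by apply: clw_eq => F hF; exact: (ZL_B F (disjointWl (vset_sub W F hF) d)).1.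
have e2 : clweight (ZL OB) W = clweight (ZL O0) W.
  by apply: clw_eq => F hF; exact: (ZL_B F (disjointWl (vset_sub W F hF) d)).2.
rewrite /corr_term e1 e2; ring.
Qed.

Lemma psum_eq N :
  psum (conn_cl_AB src dst A B) (corr_term src dst Phys Bnd Aten mu OA OB) N =
  psum (conn_cl src dst A B) (clterm src dst Phys Bnd Aten mu OAB) N +
  psum (conn_cl src dst A B) (clterm src dst Phys Bnd Aten mu O0) N -
  psum (conn_cl src dst A B) (clterm src dst Phys Bnd Aten mu OA) N -
  psum (conn_cl src dst A B) (clterm src dst Phys Bnd Aten mu OB) N.
Proof.
rewrite /psum -big_split -!sumrB /=.
rewrite [LHS]big_mkcond [RHS]big_mkcond; apply: eq_bigr => W _.
set w := cnat W.
case hAB: (conn_cl_AB src dst A B w).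
  have hc : conn_cl src dst A B w by move: hAB; rewrite /conn_cl_AB => /and3P [].
  by rewrite hc !andbT; case: ifP => // _; rewrite corr_split.
case hc: (conn_cl src dst A B w); last by rewrite !andbF.
rewrite andbF andbT; case: ifP => // _.
by rewrite -corr_split corr_zero ?hAB ?hc.
Qed.


Lemma cexpN (x : C) : cexp x != 0 -> cexp (- x) = (cexp x)^-1.
Proof. by move=> hx; apply: (mulIf hx); rewrite -cexpD addNr cexp0 mulVf. Qed.

Lemma main_core :
  Znw src dst Phys Bnd Aten O0 != 0 ->
  expect src dst Phys Bnd Aten OA != 0 -> expect src dst Phys Bnd Aten OB != 0 ->
  cluster_expansion src dst Phys Bnd Aten mu A B O0 ->
  cluster_expansion src dst Phys Bnd Aten mu A B OA ->
  cluster_expansion src dst Phys Bnd Aten mu A B OB ->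
  cluster_expansion src dst Phys Bnd Aten mu A B OAB ->
  exists T : C,
    ccvg (psum (conn_cl_AB src dst A B) (corr_term src dst Phys Bnd Aten mu OA OB)) T /\
    expect src dst Phys Bnd Aten OAB - expect src dst Phys Bnd Aten OA * expect src dst Phys Bnd Aten OB
      = expect src dst Phys Bnd Aten OA * expect src dst Phys Bnd Aten OB * (cexp T - 1).
Proof.
move=> hZ0 heA heB [_ [S0 [c0 e0]]] [_ [SA [cA eA]]] [_ [SB [cB eB]]] [_ [SAB [cAB eAB]]].
exists (SAB + S0 - SA - SB); split.
  have -> : psum (conn_cl_AB src dst A B) (corr_term src dst Phys Bnd Aten mu OA OB) =
    (fun N => psum (conn_cl src dst A B) (clterm src dst Phys Bnd Aten mu OAB) N +
  psum (conn_cl src dst A B) (clterm src dst Phys Bnd Aten mu O0) N -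
  psum (conn_cl src dst A B) (clterm src dst Phys Bnd Aten mu OA) N -
  psum (conn_cl src dst A B) (clterm src dst Phys Bnd Aten mu OB) N).
    by apply: boolp.funext => N; exact: psum_eq.
  exact: ccvg_comb.
move: hZ0 heA heB; rewrite /expect eAB eA eB e0 => hZ0 heA heB.
have a0 : cexp SA != 0.
  by apply: contraNneq heA => ->; rewrite mulr0 mul0r.
have b0 : cexp SB != 0.
  by apply: contraNneq heB => ->; rewrite mulr0 mul0r.
have z0 : cexp S0 != 0.
  by apply: contraNneq hZ0 => ->; rewrite mulr0.
have hrel : ZB OAB = ZB OA * ZB OB / ZB O0.
  by rewrite -ZBP_rel mulfK.
rewrite !cexpD !cexpN // hrel.
by field; rewrite b0 a0 z0 n0.
Qed.

End Main.

Theorem mainTheorem8 (R : realType) (V E : finType) (src dst : E -> V)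
  (Phys : V -> finType) (Bnd : E -> finType)
  (Aten : forall v : V, Phys v -> Lcfg src dst Bnd v -> R[i])
  (mu : forall e : E, bool -> Kb Bnd e -> R[i])
  (A B : {set V})
  (oA : LPC Phys A -> LPC Phys A -> R[i])
  (oB : LPC Phys B -> LPC Phys B -> R[i]) :
  let O0 := op_id Phys in
  let OA := ext_op Phys A oA in
  let OB := ext_op Phys B oB in
  let OAB := op_mul Phys OA OB in
  let Z := Znw src dst Phys Bnd Aten in
  let ZBP := ZBP src dst Phys Bnd Aten mu in
  let expect := expect src dst Phys Bnd Aten in
  let CE := cluster_expansion src dst Phys Bnd Aten mu A B in
  simple_graph src dst ->
  0 < Z O0 ->
  BP_fixed_point src dst Phys Bnd Aten mu ->
  [disjoint A & B] ->
  ZBP O0 != 0 -> ZBP OA != 0 -> ZBP OB != 0 -> ZBP OAB != 0 ->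
  expect OA != 0 -> expect OB != 0 ->
  CE O0 -> CE OA -> CE OB -> CE OAB ->
  exists T : R[i],
    ccvg (psum (conn_cl_AB src dst A B)
               (corr_term src dst Phys Bnd Aten mu OA OB)) T /\
    expect OAB - expect OA * expect OB
      = expect OA * expect OB * (cexp T - 1).
Proof.
move=> O0 OA OB OAB Z ZBP' ex CE _ hpos _ dAB h0 hA hB hAB eA eB c0 cA cB cAB.
have hz : Znw src dst Phys Bnd Aten (op_id Phys) != 0.
  by move: hpos; rewrite lt0r => /andP[].
exact: (@main_core R V E src dst Phys Bnd Aten mu A B oA oB dAB h0 hA hB hAB hz eA eB c0 cA cB cAB).
Qed.
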